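(* Let $G$ be a group with identity $e$, let $A$ be a set with at least two elements, and let $\tau : A^G \to A^G$ be a lazy cellular automaton with unique active transition $p \in A^S$ (where $S \subseteq G$ is finite with $e \in S$) and writing symbol $a \in A \setminus \{ p(e) \}$. Assume that $p$ is quasi-constant with non-constant element $r \in S$. \begin{enumerate} \item If $a \neq p(s)$ for all $s \in S$, then $\mathrm{ord}(\tau)=2$. \item If $r \neq e$ and $a= p(r)$, then $\mathrm{ord}(\tau)$ is finite if and only if there exists $n \geq 2$ such that $r^n \in S$. Moreover, in this case, $\mathrm{ord}(\tau) = \min \{ n \geq 2 : r^n \in S \}$. \item If $r = e$ and $a = p(s)$ for all $s \in S \setminus \{e\}$, then $\mathrm{ord}(\tau)$ is finite if and only if there exists $n \geq 2$ such that for every word $w\in (S\setminus\{e\})^{n-1}$ there exists a subword $v\sqsubseteq w$ with $\theta(v)^{-1}\in S$. In that case, $\mathrm{ord}(\tau)$ is the minimum $n \geq 2$ satisfying this property. \end{enumerate}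
   Context: $A^G$ is the set of all maps $G \to A$, with the shift action $(g\cdot x)(h) := x(hg)$ for $g,h \in G$, $x \in A^G$. A cellular automaton is a map $\tau : A^G \to A^G$ for which there are a finite $S \subseteq G$ and a local map $\mu : A^S \to A$ with $\tau(x)(g) = \mu((g\cdot x)|_S)$ for all $x \in A^G$, $g \in G$. $\tau$ is lazy if there is such a local defining map $\mu : A^S \to A$ with $e \in S$ and a pattern $p \in A^S$ such that for all $z \in A^S$: $\mu(z) = z(e)$ if and only if $z \neq p$; then $p$ is the unique active transition of $\tau$ and $a := \mu(p) \in A \setminus\{p(e)\}$ is its writing symbol. $\tau^k$ denotes the $k$-fold composition ($\tau^0$ the identity), and $\mathrm{ord}(\tau) := |\{\tau^k : k \in \mathbb{N}\}|$ with $\mathbb{N} = \{0,1,2,\dots\}$. A pattern $p \in A^S$ is quasi-constant if $p$ is not constant and there is $r \in S$ such that $p|_{S\setminus\{r\}}$ is constant; such $r$ is the non-constant element of $p$. A word of length $m$ on $T \subseteq G$ is an element $(s_1,\dots,s_m) \in T^m$; $\theta(s_1,\dots,s_m) := s_1 s_2 \cdots s_m \in G$; $v$ is a subword of $w=(s_1,\dots,s_m)$, written $v \sqsubseteq w$, if $v = (s_i, s_{i+1},\dots,s_j)$ for some $1 \le i \le j \le m$. *)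

(* Defs.v *)
From Stdlib Require Import List Arith.
Import ListNotations.


Record group := Group {
  carrier :> Type;
  gmul : carrier -> carrier -> carrier;
  gone : carrier;
  ginv : carrier -> carrier;
  gmulA : forall x y z, gmul x (gmul y z) = gmul (gmul x y) z;
  gmul1g : forall x, gmul gone x = x;
  gmulg1 : forall x, gmul x gone = x;
  gmulVg : forall x, gmul (ginv x) x = gone;
  gmulgV : forall x, gmul x (ginv x) = gone
}.

Section CA.
Variables (G : group) (A : Type).

Definition shift (g : G) (x : G -> A) : G -> A := fun h => x (gmul G h g).

Definition agree_on (S : list G) (z z' : G -> A) : Prop :=
  forall s, In s S -> z s = z' s.

(* tau is a cellular automaton with memory set S and local map mu
   (mu only depends on the values on S, i.e. mu : A^S -> A) *)
Definition is_ca_with (tau : (G -> A) -> (G -> A)) (S : list G)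
  (mu : (G -> A) -> A) : Prop :=
  (forall z z', agree_on S z z' -> mu z = mu z') /\
  (forall x g, tau x g = mu (shift g x)).

Definition lazy_ca (tau : (G -> A) -> (G -> A)) (S : list G) (p : G -> A)
  (a : A) : Prop :=
  exists mu, is_ca_with tau S mu /\ In (gone G) S /\
    (forall z, mu z = z (gone G) <-> ~ agree_on S z p) /\
    mu p = a.

Definition iter_ca (tau : (G -> A) -> (G -> A)) (k : nat) := Nat.iter k tau.

Definition ord_eq (tau : (G -> A) -> (G -> A)) (n : nat) : Prop :=
  exists l : list ((G -> A) -> (G -> A)),
    NoDup l /\ length l = n /\
    (forall f, In f l <-> exists k, f = iter_ca tau k).

Definition ord_finite (tau : (G -> A) -> (G -> A)) : Prop :=
  exists n, ord_eq tau n.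

Definition constant_on (S : list G) (p : G -> A) : Prop :=
  forall s t, In s S -> In t S -> p s = p t.

Definition quasi_constant_at (S : list G) (p : G -> A) (r : G) : Prop :=
  ~ constant_on S p /\ In r S /\
  (forall s t, In s S -> In t S -> s <> r -> t <> r -> p s = p t).

End CA.

Definition gpow (G : group) (r : G) (n : nat) : G := Nat.iter n (gmul G r) (gone G).

Definition theta (G : group) (w : list G) : G := fold_right (gmul G) (gone G) w.

Definition subword (T : Type) (v w : list T) : Prop :=
  v <> [] /\ exists w1 w2, w = w1 ++ v ++ w2.

Definition word_property (G : group) (S : list G) (n : nat) : Prop :=
  forall w : list G, length w = n - 1 ->
    (forall s, In s w -> In s S /\ s <> gone G) ->
    exists v, subword G v w /\ In (ginv G (theta G v)) S.

(* Main.v *)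
Require Import Defs.
From Stdlib Require Import List Arith Lia Classical FunctionalExtensionality ClassicalEpsilon.
Import ListNotations.


Lemma gcancel_l (G : group) (x y z : G) : gmul G x y = gmul G x z -> y = z.
Proof.
  intros H. rewrite <- (gmul1g G y), <- (gmul1g G z), <- (gmulVg G x), <- !gmulA, H. reflexivity.
Qed.

Lemma gcancel_r (G : group) (x y z : G) : gmul G y x = gmul G z x -> y = z.
Proof.
  intros H. rewrite <- (gmulg1 G y), <- (gmulg1 G z), <- (gmulgV G x), !gmulA, H. reflexivity.
Qed.

Lemma gsolve (G : group) (s u v : G) : gmul G s (gmul G u v) = v -> s = ginv G u.
Proof.
  intros H. rewrite gmulA in H. rewrite <- (gmul1g G v) in H at 2.
  apply gcancel_r in H.
  rewrite <- (gmulg1 G s), <- (gmulgV G u), gmulA, H, gmul1g. reflexivity.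
Qed.

Lemma ginv_one (G : group) : ginv G (gone G) = gone G.
Proof. rewrite <- (gmul1g G (ginv G (gone G))). apply gmulgV. Qed.

Lemma theta_app (G : group) (u v : list G) : theta G (u ++ v) = gmul G (theta G u) (theta G v).
Proof.
  induction u; simpl. - rewrite gmul1g; auto. - rewrite IHu, gmulA. auto.
Qed.

Lemma gpow_add (G : group) (r : G) m n : gpow G r (m + n) = gmul G (gpow G r m) (gpow G r n).
Proof.
  induction m; simpl. - rewrite gmul1g; auto. - unfold gpow in *. simpl. rewrite IHm, gmulA; auto.
Qed.

Lemma gpow_one (G : group) (r : G) : gpow G r 1 = r.
Proof. unfold gpow; simpl. apply gmulg1. Qed.

Lemma gpow_S (G : group) (r : G) n : gpow G r (S n) = gmul G r (gpow G r n).
Proof. reflexivity. Qed.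

Lemma gpow_S' (G : group) (r : G) n : gpow G r (S n) = gmul G (gpow G r n) r.
Proof. replace (S n) with (n + 1) by lia. rewrite gpow_add, gpow_one. auto. Qed.


Lemma iter_add {X} (f : X -> X) a b x : Nat.iter (a + b) f x = Nat.iter a f (Nat.iter b f x).
Proof. induction a; simpl; congruence. Qed.

Lemma min_ex (P : nat -> Prop) : (exists n, P n) -> exists N, P N /\ forall n, P n -> N <= n.
Proof.
  intros [n Hn]. apply NNPP; intro H.
  assert (forall k, forall m, m <= k -> ~ P m).
  { induction k; intros m Hm HP.
    - apply H; exists m; split; auto; intros; lia.
    - destruct (Nat.eq_dec m (S k)).
      + subst. apply H. exists (S k). split; auto. intros n' Hn'.
        destruct (le_lt_dec (S k) n'); auto. exfalso; apply (IHk n'); auto; lia.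
      + apply (IHk m); auto; lia. }
  apply (H0 n n); auto.
Qed.

Lemma gen (G : group) (A : Type) (tau : (G -> A) -> (G -> A)) (P : nat -> Prop) :
  (forall x i j, i < j -> Nat.iter j tau x <> Nat.iter (j-1) tau x -> Nat.iter i tau x <> Nat.iter j tau x) ->
  (forall n, P n -> 1 <= n) ->
  (forall N, P N -> (forall n, P n -> N <= n) -> forall x, Nat.iter N tau x = Nat.iter (N-1) tau x) ->
  (forall k, 1 <= k -> (forall n, P n -> k < n) -> exists x, Nat.iter k tau x <> Nat.iter (k-1) tau x) ->
  (ord_finite G A tau <-> exists n, P n) /\
  (forall m, ord_eq G A tau m <-> (P m /\ forall n, P n -> m <= n)).
Proof.
  intros Hmono HP1 Hstab Hmove.
  assert (Hdist : forall i j, i < j -> (forall n, P n -> j < n) -> iter_ca G A tau i <> iter_ca G A tau j).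
  { intros i j Hij Hj E. destruct (Hmove j) as [x Hx]; [lia|auto|].
    apply (Hmono x i j Hij Hx). unfold iter_ca in E. rewrite E. reflexivity. }
  assert (Hnd : forall N, (forall i j, i < j < N -> iter_ca G A tau i <> iter_ca G A tau j) ->
            NoDup (map (iter_ca G A tau) (seq 0 N))).
  { intros N HN. apply NoDup_map_NoDup_ForallPairs; [|apply seq_NoDup].
    intros i j Hi Hj E. apply in_seq in Hi, Hj.
    destruct (lt_eq_lt_dec i j) as [[?|?]|?]; auto.
    - exfalso; apply (HN i j); auto; lia.
    - exfalso; apply (HN j i); auto; lia. }
  assert (Hinf : ~ (exists n, P n) -> forall m, ~ ord_eq G A tau m).
  { intros HnP m [l [Hl [Hlen Hmem]]].
    assert (NoDup (map (iter_ca G A tau) (seq 0 (S m)))).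
    { apply Hnd. intros i j Hij. apply Hdist; [lia|]. intros n Hn; exfalso; apply HnP; eauto. }
    apply NoDup_incl_length with (l' := l) in H.
    - rewrite length_map, length_seq in H. lia.
    - intros f Hf. apply in_map_iff in Hf. destruct Hf as [k [<- _]]. apply Hmem. eauto. }
  assert (Hfin : forall N, P N -> (forall n, P n -> N <= n) -> ord_eq G A tau N).
  { intros N HN Hmin. assert (HN1 := HP1 N HN).
    assert (Hst : forall k, N - 1 <= k -> iter_ca G A tau k = iter_ca G A tau (N-1)).
    { induction k; intros Hk.
      - replace (N-1) with 0 by lia. reflexivity.
      - destruct (Nat.eq_dec (N-1) (S k)) as [e|ne]; [rewrite e; reflexivity|].
        extensionality x. unfold iter_ca in *. simpl. rewrite IHk by lia.
        replace (tau (Nat.iter (N - 1) tau x)) with (Nat.iter N tau x).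
        + apply Hstab; auto.
        + clear -HN1. destruct N; [lia|]. replace (S N - 1) with N by lia. reflexivity. }
    exists (map (iter_ca G A tau) (seq 0 N)). split; [|split].
    - apply Hnd. intros i j Hij. apply Hdist; [lia|]. intros n Hn. specialize (Hmin n Hn). lia.
    - rewrite length_map, length_seq. reflexivity.
    - intros f; split.
      + intros Hf. apply in_map_iff in Hf. destruct Hf as [k [<- _]]. eauto.
      + intros [k ->]. apply in_map_iff.
        destruct (le_lt_dec N k).
        * exists (N-1). split; [symmetry; apply Hst; lia|apply in_seq; lia].
        * exists k. split; auto. apply in_seq; lia. }
  assert (Huniq : forall m n, ord_eq G A tau m -> ord_eq G A tau n -> m = n).
  { intros m n [l [Hl [Hlen Hmem]]] [l' [Hl' [Hlen' Hmem']]].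
    assert (incl l l') by (intros f Hf; apply Hmem', Hmem, Hf).
    assert (incl l' l) by (intros f Hf; apply Hmem, Hmem', Hf).
    apply NoDup_incl_length in H; auto. apply NoDup_incl_length in H0; auto. lia. }
  split.
  - split.
    + intros [m Hm]. apply NNPP; intro C. exact (Hinf C m Hm).
    + intros HE. destruct (min_ex P HE) as [N [HN Hmin]]. exists N. auto.
  - intros m; split.
    + intros Hm. destruct (classic (exists n, P n)) as [HE|HE].
      * destruct (min_ex P HE) as [N [HN Hmin]].
        rewrite (Huniq m N Hm (Hfin N HN Hmin)). auto.
      * exfalso; exact (Hinf HE m Hm).
    + intros [HPm Hmin]. auto.
Qed.


Definition act (G : group) (A : Type) (S : list G) (p : G -> A) (y : G -> A) (g : G) :=
  agree_on G A S (shift G A g y) p.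

Lemma lazy_spec (G : group) (A : Type) tau SS p a :
  lazy_ca G A tau SS p a ->
  (forall y g, act G A SS p y g -> tau y g = a) /\
  (forall y g, ~ act G A SS p y g -> tau y g = y g) /\ In (gone G) SS.
Proof.
  intros [mu [[Hloc Htau] [He [Hiff Hmu]]]]. split; [|split]; auto.
  - intros y g H. rewrite Htau, <- Hmu. apply Hloc. exact H.
  - intros y g H. rewrite Htau. apply Hiff in H. rewrite H. unfold shift. rewrite gmul1g. auto.
Qed.

Lemma persist (G : group) (A : Type) tau SS p a
  (HA : forall y g, act G A SS p y g -> tau y g = a)
  (HN : forall y g, ~ act G A SS p y g -> tau y g = y g) :
  forall x i j g, Nat.iter i tau x g = a -> i <= j -> Nat.iter j tau x g = a.
Proof.
  intros x i j g H Hij. induction Hij; auto. simpl.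
  destruct (classic (act G A SS p (Nat.iter m tau x) g)); [apply HA | rewrite HN]; auto.
Qed.

Lemma mono (G : group) (A : Type) tau SS p a
  (HA : forall y g, act G A SS p y g -> tau y g = a)
  (HN : forall y g, ~ act G A SS p y g -> tau y g = y g) :
  forall x i j, i < j -> Nat.iter j tau x <> Nat.iter (j-1) tau x -> Nat.iter i tau x <> Nat.iter j tau x.
Proof.
  intros x i j Hij Hne E. destruct j as [|j]; [lia|].
  replace (S j - 1) with j in Hne by lia.
  apply Hne. extensionality g. simpl.
  destruct (classic (act G A SS p (Nat.iter j tau x) g)) as [Ha|Ha]; [|apply HN; auto].
  rewrite HA by auto. symmetry. apply (persist G A tau SS p a HA HN x i); [|lia].
  rewrite E. simpl. apply HA; auto.
Qed.

Lemma part1 (G : group) (A : Type) tau SS p a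
  (HA : forall y g, act G A SS p y g -> tau y g = a)
  (HN : forall y g, ~ act G A SS p y g -> tau y g = y g) (He : In (gone G) SS) :
  a <> p (gone G) -> (forall s, In s SS -> a <> p s) -> ord_eq G A tau 2.
Proof.
  intros Hape Has.
  destruct (gen G A tau (fun n => n = 2) (mono G A tau SS p a HA HN)) as [_ H].
  - intros; lia.
  - intros N HN2 _ x. subst N. extensionality g. simpl.
    destruct (classic (act G A SS p (tau x) g)) as [Ha|Ha]; [|apply HN; auto].
    exfalso.
    assert (Hx : act G A SS p x g).
    { intros s Hs. specialize (Ha s Hs). unfold shift in *.
      destruct (classic (act G A SS p x (gmul G s g))) as [Hb|Hb].
      - rewrite HA in Ha by auto. exfalso; exact (Has s Hs Ha).
      - rewrite HN in Ha; auto. }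
    specialize (Ha (gone G) He). unfold shift in Ha. rewrite gmul1g, HA in Ha by auto. auto.
  - intros k Hk Hk2. exists p. assert (k = 1) by (specialize (Hk2 2 eq_refl); lia). subst k.
    simpl. intro E. assert (tau p (gone G) = p (gone G)) by (rewrite E; auto).
    rewrite HA in H. auto. intros s Hs. unfold shift. rewrite gmulg1. auto.
  - apply H. split; auto. intros; lia.
Qed.


Lemma part2 (G : group) (A : Type) tau SS p a r
  (HA : forall y g, act G A SS p y g -> tau y g = a)
  (HN : forall y g, ~ act G A SS p y g -> tau y g = y g) (He : In (gone G) SS) (Hr : In r SS) :
  a <> p (gone G) -> r <> gone G -> a = p r ->
  (forall s, In s SS -> s <> r -> p s = p (gone G)) ->
  (ord_finite G A tau <-> exists n, 2 <= n /\ In (gpow G r n) SS) /\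
     (forall m, ord_eq G A tau m <->
        (2 <= m /\ In (gpow G r m) SS /\
         forall n, 2 <= n -> In (gpow G r n) SS -> m <= n)).
Proof.
  intros Hape Hre Har Hpb. set (b := p (gone G)) in *.
  set (P := fun n => 2 <= n /\ In (gpow G r n) SS).
  destruct (gen G A tau P (mono G A tau SS p a HA HN)) as [H1 H2].
  - unfold P; intros; lia.
  -
    intros N [HN2 HNS] Hmin x.
    assert (HrN : gpow G r N <> r).
    { intros E. assert (E' : gpow G r (N-1) = gone G).
      { apply (gcancel_l G r). rewrite gmulg1, <- gpow_S. replace (Datatypes.S (N-1)) with N by lia. auto. }
      destruct (Nat.eq_dec (N-1) 1) as [e|e].
      - rewrite e, gpow_one in E'. auto.
      - assert (N <= N - 1) by (apply Hmin; split; [lia| rewrite E'; auto]). lia. }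
    destruct N as [|M]; [lia|]. replace (Datatypes.S M - 1) with M by lia.
    extensionality g. simpl.
    destruct (classic (act G A SS p (Nat.iter M tau x) g)) as [Ha|Ha]; [|apply HN; auto].
    exfalso.
    assert (Hback : forall t h, act G A SS p (Nat.iter (Datatypes.S t) tau x) h ->
                      act G A SS p (Nat.iter t tau x) (gmul G r h)).
    { intros t h Hact.
      assert (Hrh : Nat.iter (Datatypes.S t) tau x (gmul G r h) = a).
      { specialize (Hact r Hr). unfold shift in Hact. rewrite Hact. auto. }
      destruct (classic (act G A SS p (Nat.iter t tau x) (gmul G r h))) as [Hb|Hb]; auto.
      exfalso. simpl in Hrh. rewrite HN in Hrh by auto.
      assert (Hh : act G A SS p (Nat.iter t tau x) h).
      { intros s Hs. unfold shift.
        destruct (classic (s = r)) as [->|Hsr]; [rewrite <- Har; auto|].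
        assert (Hv := Hact s Hs). unfold shift in Hv. simpl in Hv.
        destruct (classic (act G A SS p (Nat.iter t tau x) (gmul G s h))) as [Hc|Hc].
        - rewrite HA in Hv by auto. rewrite Hpb in Hv by auto. exfalso; auto.
        - rewrite HN in Hv by auto. auto. }
      specialize (Hact (gone G) He). unfold shift in Hact. rewrite gmul1g in Hact. simpl in Hact.
      rewrite HA in Hact by auto. auto. }
    assert (Hit : forall j t h, act G A SS p (Nat.iter (j + t) tau x) h ->
                      act G A SS p (Nat.iter t tau x) (gmul G (gpow G r j) h)).
    { induction j; intros t h Hh.
      - simpl in *. rewrite gmul1g. auto.
      - apply Hback in Hh. apply IHj in Hh. rewrite gpow_S', <- gmulA. auto. }
    assert (H0 := Hit M 0 g). rewrite Nat.add_0_r in H0. specialize (H0 Ha).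
    specialize (H0 r Hr). unfold shift in H0. simpl in H0.
    rewrite gmulA, <- gpow_S, <- Har in H0.
    assert (H1 : Nat.iter M tau x (gmul G (gpow G r (Datatypes.S M)) g) = a).
    { apply (persist G A tau SS p a HA HN x 0); [exact H0|lia]. }
    specialize (Ha _ HNS). unfold shift in Ha. rewrite H1, Hpb in Ha by auto. auto.
  - intros k Hk1 Hk.
    assert (noP : forall m, 2 <= m -> m <= k -> ~ In (gpow G r m) SS).
    { intros m Hm1 Hm2 Hin. specialize (Hk m (conj Hm1 Hin)). lia. }
    set (x0 := fun h => if excluded_middle_informative (h = gpow G r k) then a else b).
    set (C := fun i h => exists j, j <= i /\ h = gpow G r (k - j)).
    assert (Inv : forall i, i <= k -> forall h, (C i h -> Nat.iter i tau x0 h = a) /\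
                                            (~ C i h -> Nat.iter i tau x0 h = b)).
    { induction i; intros Hi h.
      - simpl. unfold x0, C. split.
        + intros [j [Hj ->]]. replace (k - j) with k by lia.
          destruct (excluded_middle_informative _); tauto.
        + intros Hn. destruct (excluded_middle_informative _); auto.
          exfalso; apply Hn. exists 0. split; auto. rewrite e. f_equal; lia.
      - specialize (IHi ltac:(lia)). split.
        + intros HC. destruct (classic (C i h)) as [Hc|Hc].
          * apply (persist G A tau SS p a HA HN x0 i); [apply IHi; auto|lia].
          * destruct HC as [j [Hj Hh]].
            assert (j = Datatypes.S i) by (destruct (Nat.eq_dec j (Datatypes.S i)); auto;
                                          exfalso; apply Hc; exists j; split; auto; lia).
            subst j. simpl. apply HA. intros s Hs. unfold shift.
            destruct (classic (s = r)) as [->|Hsr].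
            -- rewrite <- Har. apply IHi. exists i. split; auto. rewrite Hh, <- gpow_S.
               f_equal. lia.
            -- rewrite Hpb by auto. apply IHi. intros [j [Hj3 Hsh]].
               rewrite Hh in Hsh.
               assert (Hs' : s = gpow G r (Datatypes.S i - j)).
               { apply (gcancel_r G (gpow G r (k - Datatypes.S i))). rewrite Hsh, <- gpow_add.
                 f_equal. lia. }
               destruct (Nat.eq_dec (Datatypes.S i - j) 1) as [e|e].
               ++ rewrite e, gpow_one in Hs'. auto.
               ++ apply (noP (Datatypes.S i - j)); [lia|lia|]. rewrite <- Hs'. auto.
        + intros HC. assert (Hc : ~ C i h) by (intros [j [Hj Hh]]; apply HC; exists j; split; auto).
          simpl. rewrite HN; [apply IHi; auto|].
          intros Hact. specialize (Hact r Hr). unfold shift in Hact. rewrite <- Har in Hact.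
          destruct (classic (C i (gmul G r h))) as [[j [Hj Hrh]]|Hn].
          * apply HC. exists (Datatypes.S j). split; [lia|].
            apply (gcancel_l G r). rewrite Hrh, <- gpow_S. f_equal. lia.
          * rewrite (proj2 (IHi _) Hn) in Hact. auto. }
    exists x0. intro E.
    assert (Ek : Nat.iter k tau x0 (gone G) = a).
    { apply (Inv k ltac:(lia)). exists k. split; auto. replace (k - k) with 0 by lia. reflexivity. }
    assert (Ek1 : Nat.iter (k-1) tau x0 (gone G) = b).
    { apply (Inv (k-1) ltac:(lia)). intros [j [Hj Hjj]].
      destruct (Nat.eq_dec (k - j) 1) as [e|e].
      - rewrite e, gpow_one in Hjj. auto.
      - apply (noP (k - j)); [lia|lia|]. rewrite <- Hjj. auto. }
    rewrite E, Ek1 in Ek. auto.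
  - unfold P in *. split; [exact H1|]. intros m. rewrite H2. firstorder.
Qed.


Lemma snoc_split {T} (l1 l2 w : list T) (s : T) :
  l1 ++ l2 = w ++ [s] -> l2 <> [] -> exists l2', l2 = l2' ++ [s] /\ w = l1 ++ l2'.
Proof.
  intros E Hne. destruct (exists_last Hne) as [l2' [y ->]].
  rewrite app_assoc in E. apply app_inj_tail in E. destruct E as [<- <-]. eauto.
Qed.

Lemma suffix_le {T} (w1 v w1' v' : list T) :
  w1 ++ v = w1' ++ v' -> length v' <= length v -> exists u, v = u ++ v' /\ w1' = w1 ++ u.
Proof.
  intros E Hl. apply app_eq_app in E. destruct E as [l [[-> ->]|[-> ->]]].
  - rewrite length_app in Hl. destruct l; [|simpl in Hl; lia].
    exists []. rewrite !app_nil_r. auto.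
  - eauto.
Qed.

Lemma part3 (G : group) (A : Type) tau SS p a
  (HA : forall y g, act G A SS p y g -> tau y g = a)
  (HN : forall y g, ~ act G A SS p y g -> tau y g = y g) (He : In (gone G) SS) :
  a <> p (gone G) ->
  (forall s, In s SS -> s <> gone G -> a = p s) ->
     (ord_finite G A tau <-> exists n, 2 <= n /\ word_property G SS n) /\
     (forall m, ord_eq G A tau m <->
        (2 <= m /\ word_property G SS m /\
         forall n, 2 <= n -> word_property G SS n -> m <= n)).
Proof.
  intros Hape Hpa. set (c := p (gone G)) in *.
  set (P := fun n => 2 <= n /\ word_property G SS n).
  destruct (gen G A tau P (mono G A tau SS p a HA HN)) as [H1 H2].
  - unfold P; intros; lia.
  - intros N [HN2 HNw] _ x.
    assert (Cx : forall i j h g u, i < j -> act G A SS p (Nat.iter i tau x) h ->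
                   act G A SS p (Nat.iter j tau x) g -> In u SS -> g = gmul G u h -> False).
    { intros i j h g u Hij Hh Hg Hu Eg.
      assert (Hga : Nat.iter j tau x g = a).
      { destruct (classic (u = gone G)) as [->|Hue].
        - rewrite gmul1g in Eg. subst g.
          apply (persist G A tau SS p a HA HN x (Datatypes.S i)); [simpl; apply HA; auto|lia].
        - apply (persist G A tau SS p a HA HN x i); [|lia].
          specialize (Hh u Hu). unfold shift in Hh. rewrite <- Eg in Hh. rewrite Hh. symmetry; auto. }
      specialize (Hg (gone G) He). unfold shift in Hg. rewrite gmul1g, Hga in Hg. auto. }
    assert (Hback : forall t h, act G A SS p (Nat.iter (Datatypes.S t) tau x) h ->
               exists s, In s SS /\ s <> gone G /\ act G A SS p (Nat.iter t tau x) (gmul G s h)).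
    { intros t h Hact. apply NNPP; intro C.
      assert (Hh : act G A SS p (Nat.iter t tau x) h).
      { intros s Hs. unfold shift.
        destruct (classic (s = gone G)) as [->|Hse].
        - assert (Hv := Hact (gone G) Hs). unfold shift in Hv. rewrite gmul1g in *. simpl in Hv.
          destruct (classic (act G A SS p (Nat.iter t tau x) h)) as [Hc|Hc].
          + rewrite HA in Hv by auto. exfalso; auto.
          + rewrite HN in Hv by auto. auto.
        - assert (Hv := Hact s Hs). unfold shift in Hv. simpl in Hv.
          destruct (classic (act G A SS p (Nat.iter t tau x) (gmul G s h))) as [Hc|Hc].
          + exfalso; apply C; eauto.
          + rewrite HN in Hv by auto. auto. }
      specialize (Hact (gone G) He). unfold shift in Hact. rewrite gmul1g in Hact. simpl in Hact.
      rewrite HA in Hact by auto. auto. }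
    assert (Q : forall t h, act G A SS p (Nat.iter t tau x) h ->
       exists w, length w = t /\ (forall s, In s w -> In s SS /\ s <> gone G) /\
         (forall w1 v, w = w1 ++ v -> act G A SS p (Nat.iter (t - length v) tau x) (gmul G (theta G v) h)) /\
         (forall w1 v w2, w = w1 ++ v ++ w2 -> v <> [] -> ~ In (ginv G (theta G v)) SS)).
    { induction t; intros h Hh.
      - exists []. split; [auto|split; [intros s []|split]].
        + intros w1 v E. symmetry in E. apply app_eq_nil in E. destruct E as [-> ->].
          simpl. rewrite gmul1g. auto.
        + intros w1 v w2 E Hv. symmetry in E. apply app_eq_nil in E. destruct E as [_ E].
          apply app_eq_nil in E. tauto.
      - destruct (Hback t h Hh) as [s [Hs [Hse Hsh]]].
        destruct (IHt _ Hsh) as [w' [Hlen [Hlet [Hsuf Hbad]]]].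
        exists (w' ++ [s]). split; [rewrite length_app, Hlen; simpl; lia|split; [|split]].
        + intros s' Hs'. apply in_app_or in Hs'. destruct Hs' as [?|[<-|[]]]; auto.
        + intros w1 v E. symmetry in E. destruct (classic (v = [])) as [->|Hv].
          * simpl. rewrite gmul1g. auto.
          * destruct (snoc_split _ _ _ _ E Hv) as [v' [-> Ew']].
            specialize (Hsuf _ _ Ew'). rewrite theta_app. simpl. rewrite length_app. simpl.
            rewrite Nat.add_1_r. simpl Nat.sub.
            rewrite gmulg1, <- gmulA. auto.
        + intros w1 v w2 E Hv Hin. symmetry in E. destruct (classic (w2 = [])) as [->|Hw2].
          * rewrite app_nil_r in E. destruct (snoc_split _ _ _ _ E Hv) as [v' [Ev Ew']].
            specialize (Hsuf _ _ Ew').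
            apply (Cx (t - length v') (Datatypes.S t) (gmul G (theta G v') (gmul G s h)) h
                      (ginv G (theta G v))); auto; [lia|].
            rewrite Ev, theta_app. simpl. rewrite gmulg1, (gmulA G (theta G v')), gmulA, gmulVg, gmul1g. auto.
          * rewrite app_assoc in E.
            destruct (snoc_split _ _ _ _ E Hw2) as [w2' [Ew2' Ew']].
            rewrite <- app_assoc in Ew'. exact (Hbad _ _ _ Ew' Hv Hin). }
    destruct N as [|M]; [lia|]. replace (Datatypes.S M - 1) with M by lia.
    extensionality g. simpl.
    destruct (classic (act G A SS p (Nat.iter M tau x) g)) as [Ha|Ha]; [|apply HN; auto].
    exfalso. destruct (Q M g Ha) as [w [Hlen [Hlet [_ Hbad]]]].
    destruct (HNw w ltac:(lia) Hlet) as [v [[Hv [w1 [w2 Ew]]] Hin]].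
    exact (Hbad _ _ _ Ew Hv Hin).
  - intros k Hk1 Hk.
    assert (Hnw : ~ word_property G SS k).
    { intros Hw. destruct (Nat.eq_dec k 1) as [->|Hk1'].
      - destruct (Hw [] eq_refl) as [v [[Hv [w1 [w2 E]]] _]]; [intros s []|].
        symmetry in E. apply app_eq_nil in E. destruct E as [_ E]. apply app_eq_nil in E. tauto.
      - assert (2 <= k) by lia. specialize (Hk k (conj H Hw)). lia. }
    unfold word_property in Hnw.
    apply not_all_ex_not in Hnw. destruct Hnw as [w Hw].
    apply imply_to_and in Hw. destruct Hw as [Hlen Hw].
    apply imply_to_and in Hw. destruct Hw as [Hlet Hw].
    assert (Hgood : forall w1 u w2, w = w1 ++ u ++ w2 -> u <> [] -> ~ In (ginv G (theta G u)) SS).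
    { intros w1 u w2 E Hu Hin. apply Hw. exists u. split; [split; eauto|auto]. }
    clear Hw.
    set (x0 := fun h => if excluded_middle_informative
                          (exists w1 v, w = w1 ++ v /\ h = theta G v) then c else a).
    set (C := fun t h => exists w1 v, w = w1 ++ v /\ length v + t <= k - 1 /\ h = theta G v).
    assert (Inv : forall t, t <= k - 1 -> forall h, (C t h -> Nat.iter t tau x0 h = c) /\
                                            (~ C t h -> Nat.iter t tau x0 h = a)).
    { induction t; intros Ht h.
      - simpl. unfold x0, C. split.
        + intros [w1 [v [E [_ Eh]]]]. destruct (excluded_middle_informative _) as [_|n]; auto.
          exfalso; eauto.
        + intros Hn. destruct (excluded_middle_informative _) as [[w1 [v [E Eh]]]|n]; auto.
          exfalso; apply Hn. exists w1, v. split; [|split]; auto.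
          rewrite E, length_app in Hlen. lia.
      - specialize (IHt ltac:(lia)). split.
        + intros [w1 [v [E [Hl Eh]]]].
          assert (Hc : C t h) by (exists w1, v; split; [|split]; auto; lia).
          simpl. rewrite HN; [apply IHt; auto|].
          intros Hact.
          assert (Hw1 : w1 <> []).
          { intros ->. simpl in E. subst w. lia. }
          destruct (exists_last Hw1) as [w1' [s Ew1]].
          assert (Hs : In s w) by (rewrite E, Ew1; apply in_or_app; left; apply in_or_app; right; left; auto).
          destruct (Hlet s Hs) as [HsS Hse].
          specialize (Hact s HsS). unfold shift in Hact.
          rewrite (proj1 (IHt _)) in Hact.
          * rewrite <- Hpa in Hact; auto.
          * exists w1', (s :: v). split; [rewrite E, Ew1, <- app_assoc; auto|].
            split; [simpl; lia|]. rewrite Eh. reflexivity.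
        + intros HC. simpl. destruct (classic (C t h)) as [Hc|Hc].
          * apply HA. destruct Hc as [w1 [v [E [Hl Eh]]]].
            assert (Hl' : length v + t = k - 1).
            { destruct (Nat.eq_dec (length v + t) (k-1)); auto. exfalso; apply HC.
              exists w1, v. split; [|split]; auto; lia. }
            intros s Hs. unfold shift.
            destruct (classic (s = gone G)) as [->|Hse].
            -- rewrite gmul1g. apply IHt. exists w1, v. auto.
            -- rewrite <- Hpa by auto. apply IHt. intros [w1' [v' [E' [Hl2 Eh2]]]].
               rewrite E in E'. destruct (suffix_le _ _ _ _ E' ltac:(lia)) as [u [Ev Ew1']].
               rewrite Eh, Ev, theta_app in Eh2. apply gsolve in Eh2.
               destruct (classic (u = [])) as [->|Hu].
               ++ simpl in Eh2. rewrite ginv_one in Eh2. auto.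
               ++ apply (Hgood w1 u v'); auto. rewrite E, Ev. auto. rewrite <- Eh2. auto.
          * apply (persist G A tau SS p a HA HN x0 t (Datatypes.S t)); [apply IHt; auto|lia]. }
    exists x0. intro E.
    assert (Ek1 : Nat.iter (k-1) tau x0 (gone G) = c).
    { apply (Inv (k-1) ltac:(lia)). exists w, []. rewrite app_nil_r. split; auto. }
    assert (Ek : Nat.iter k tau x0 (gone G) = a).
    { replace k with (Datatypes.S (k-1)) by lia. simpl. apply HA. intros s Hs. unfold shift.
      rewrite gmulg1. destruct (classic (s = gone G)) as [->|Hse]; [auto|].
      rewrite <- Hpa by auto. apply (Inv (k-1) ltac:(lia)).
      intros [w1 [v [Ew [Hl Eh]]]]. destruct v; [simpl in Eh; auto|simpl in Hl; lia]. }
    rewrite E, Ek1 in Ek. auto.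
  - unfold P in *. split; [exact H1|]. intros m. rewrite H2. firstorder.
Qed.

Theorem theorem1 (G : group) (A : Type) (tau : (G -> A) -> (G -> A))
  (S : list G) (p : G -> A) (a : A) (r : G) :
  (exists a1 a2 : A, a1 <> a2) ->
  lazy_ca G A tau S p a ->
  a <> p (gone G) ->
  quasi_constant_at G A S p r ->
  (* 1 *)
  ((forall s, In s S -> a <> p s) -> ord_eq G A tau 2) /\
  (* 2 *)
  (r <> gone G -> a = p r ->
     (ord_finite G A tau <-> exists n, 2 <= n /\ In (gpow G r n) S) /\
     (forall m, ord_eq G A tau m <->
        (2 <= m /\ In (gpow G r m) S /\
         forall n, 2 <= n -> In (gpow G r n) S -> m <= n))) /\
  (* 3 *)
  (r = gone G -> (forall s, In s S -> s <> gone G -> a = p s) ->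
     (ord_finite G A tau <-> exists n, 2 <= n /\ word_property G S n) /\
     (forall m, ord_eq G A tau m <->
        (2 <= m /\ word_property G S m /\
         forall n, 2 <= n -> word_property G S n -> m <= n))).
Proof.
  intros _ Hlazy Hape [Hnc [Hr Hpq]].
  destruct (lazy_spec G A tau S p a Hlazy) as [HA [HN He]].
  split; [|split].
  - apply (part1 G A tau S p a HA HN He Hape).
  - intros Hre Har. apply (part2 G A tau S p a r HA HN He Hr Hape Hre Har).
    intros s Hs Hsr. apply Hpq; auto.
  - intros -> Hpa. apply (part3 G A tau S p a HA HN He Hape Hpa).
Qed.
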